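(* Let $G$ be a graph. Then $\lfloor \mathrm{sp}\rfloor(G)=0$ if and only if $G$ is a disjoint union of paths.
   Context: All graphs are finite, have at least one vertex, have no loops, and may have multiple (parallel) edges. A unique shortest path is a shortest $u$–$v$ path $P$ such that every $u$–$v$ path with the same number of vertices is identical to $P$, where two paths with different edge sequences are different even if their vertex sequences agree; a single vertex is a unique shortest path. The parade number $\mathrm{usp}(G)$ is the largest number of vertices of a unique shortest path in $G$. The spectator number is $\mathrm{sp}(G)=|V(G)|-\mathrm{usp}(G)$. A minor of $H$ is any graph obtained from $H$ by a sequence of: deleting an isolated vertex, deleting an edge, contracting an edge that has no edge parallel to it. The spectator floor $\lfloor \mathrm{sp}\rfloor(G)$ is the minimum of $\mathrm{sp}(H)$ over all graphs $H$ of which $G$ is a minor. *)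

(* Defs.v *)
From Stdlib Require Import Relations.
From mathcomp Require Import all_boot.
From mathcomp Require Import boolp.

Set Implicit Arguments.
Unset Strict Implicit.
Unset Printing Implicit Defensive.

(* Edges are elements of a finite type E; each edge has two (distinct)
   endpoints; parallel edges are distinct elements of E with the same
   endpoints.  The orientation of [gends e] is irrelevant (see [joins]). *)
Record graph := Graph {
  gV : finType;
  gE : finType;
  gends : gE -> gV * gV;
  gnoloop : forall e, (gends e).1 != (gends e).2;
  gnonempty : 0 < #|gV|
}.

Definition joins (G : graph) (e : gE G) (x y : gV G) : bool :=
  (gends e == (x, y)) || (gends e == (y, x)).

Definition is_path (G : graph) (vs : seq (gV G)) (es : seq (gE G)) : bool :=
  [&& size vs == (size es).+1, uniq vs &
      all (fun t => joins t.1 t.2.1 t.2.2) (zip es (zip vs (behead vs)))].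

Definition uv_path (G : graph) (u v : gV G) vs es : bool :=
  [&& is_path (G:=G) vs es, ohead vs == Some u & last u vs == v].

Definition unique_shortest_path (G : graph) (vs : seq (gV G)) (es : seq (gE G)) : Prop :=
  exists u v : gV G,
    [/\ uv_path u v vs es,
        (forall vs' es', uv_path u v vs' es' -> size vs <= size vs') &
        (forall vs' es', uv_path u v vs' es' -> size vs' = size vs ->
            vs' = vs /\ es' = es)].

Definition has_usp_of_size (G : graph) (k : nat) : Prop :=
  exists vs es, unique_shortest_path (G:=G) vs es /\ size vs = k.

(* parade number: the largest number of vertices of a unique shortest path
   (paths have distinct vertices, so this is at most #|V|). *)
Definition usp (G : graph) : nat :=
  \max_(k < #|gV G|.+1 | `[< has_usp_of_size G k >]) k.

Definition sp (G : graph) : nat := #|gV G| - usp G.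

Definition iso_step (G H : graph) : Prop :=
  exists (f : gV G -> gV H) (g : gE G -> gE H),
    [/\ bijective f, bijective g &
        forall e, joins (g e) (f (gends e).1) (f (gends e).2)].

Definition delete_vertex_step (G H : graph) : Prop :=
  exists (v : gV H) (f : gV G -> gV H) (g : gE G -> gE H),
    [/\ (forall e : gE H, ((gends e).1 != v) && ((gends e).2 != v)),
        injective f,
        (forall x, x != v <-> exists y, f y = x),
        bijective g &
        forall e, joins (g e) (f (gends e).1) (f (gends e).2)].

Definition delete_edge_step (G H : graph) : Prop :=
  exists (e0 : gE H) (f : gV G -> gV H) (g : gE G -> gE H),
    [/\ bijective f, injective g,
        (forall e, e != e0 <-> exists e', g e' = e) &
        forall e, joins (g e) (f (gends e).1) (f (gends e).2)].

(* G is obtained from H by contracting an edge e0 = uv that has no edge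
   parallel to it: f : V(H) -> V(G) is onto and identifies exactly u and v;
   the edges of G are the edges of H other than e0, with endpoints mapped by f. *)
Definition contract_edge_step (G H : graph) : Prop :=
  exists (e0 : gE H) (f : gV H -> gV G) (g : gE G -> gE H),
    let u := (gends e0).1 in let v := (gends e0).2 in
    [/\ (forall e, joins e u v -> e = e0) /\
        (forall y, exists x, f x = y),
        (forall x y, f x = f y <->
           (x = y \/ (x = u /\ y = v) \/ (x = v /\ y = u))),
        injective g,
        (forall e, e != e0 <-> exists e', g e' = e) &
        forall e, joins e (f (gends (g e)).1) (f (gends (g e)).2)].

Definition minor_step (G H : graph) : Prop :=
  [\/ iso_step G H, delete_vertex_step G H, delete_edge_step G H
    | contract_edge_step G H].

Definition minor : graph -> graph -> Prop := clos_refl_trans graph minor_step.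

Lemma spfloor_ex (G : graph) :
  exists n, `[< exists H, minor G H /\ sp H = n >].
Proof.
exists (sp G); apply/asboolP; exists G; split=> //; exact: rt_refl.
Qed.

Definition spfloor (G : graph) : nat := ex_minn (spfloor_ex G).

(* G is a disjoint union of paths: V(G) is partitioned into nonempty
   sequences s (the paths), every edge joins two consecutive vertices of
   some block, and each pair of consecutive vertices of a block is joined
   by exactly one edge. *)
Definition disjoint_union_of_paths (G : graph) : Prop :=
  exists ss : seq (seq (gV G)),
    [/\ all (fun s => s != [::]) ss,
        uniq (flatten ss),
        (forall x, x \in flatten ss),
        (forall e, exists2 s, s \in ss &
           exists2 i, i.+1 < size s &
             exists x0, joins e (nth x0 s i) (nth x0 s i.+1)) &
        (forall s, s \in ss -> forall i, i.+1 < size s ->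
           forall x0, #|[set e | joins e (nth x0 s i) (nth x0 s i.+1)]| = 1)].

(* Main.v *)
Require Import Defs.
From Stdlib Require Import Relations.
From mathcomp Require Import all_boot boolp zify.
Set Implicit Arguments. Unset Strict Implicit. Unset Printing Implicit Defensive.


Lemma joinsP {G : graph} (e : gE G) (x : gV G) (y : gV G) : joins e x y ->
  ((gends e).1 = x /\ (gends e).2 = y) \/ ((gends e).1 = y /\ (gends e).2 = x).
Proof. rewrite /joins; case: (gends e) => p q /orP[] /eqP [-> ->]; auto. Qed.

Lemma joinsC {G : graph} (e : gE G) (x : gV G) (y : gV G) : joins e x y = joins e y x.
Proof. by rewrite /joins orbC. Qed.

Lemma joins_ends {G : graph} (e : gE G) : joins e (gends e).1 (gends e).2.
Proof. by rewrite /joins -surjective_pairing eqxx. Qed.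

Lemma is_path_elim {G : graph} (vs : seq (gV G)) (es : seq (gE G)) : is_path vs es ->
  [/\ size vs = (size es).+1, uniq vs &
    forall e0 x0 k, k < size es -> joins (nth e0 es k) (nth x0 vs k) (nth x0 vs k.+1)].
Proof.
case/and3P => /eqP Hs Hu /allP Ha; split => // e0 x0 k Hk.
have Hz : size (zip vs (behead vs)) = size es by rewrite size_zip size_behead Hs /=; lia.
have Hm : nth (e0, (x0, x0)) (zip es (zip vs (behead vs))) k \in zip es (zip vs (behead vs)).
  by apply: mem_nth; rewrite size_zip Hz minnn.
have := Ha _ Hm; rewrite nth_zip_cond size_zip Hz minnn Hk /=.
by rewrite nth_zip_cond Hz Hk /= nth_behead.
Qed.

Lemma is_path_intro {G : graph} (vs : seq (gV G)) (es : seq (gE G)) : size vs = (size es).+1 -> uniq vs ->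
  (forall e0 x0 k, k < size es -> joins (nth e0 es k) (nth x0 vs k) (nth x0 vs k.+1)) ->
  is_path vs es.
Proof.
move=> Hs Hu Ha; apply/and3P; split => //; first by rewrite Hs.
case: es Hs Ha => [|e0 es'] Hs Ha; first by case: (zip vs (behead vs)).
case: vs Hs Hu Ha => [|x0 vs'] Hs Hu Ha //.
have Hz : size (zip (x0 :: vs') (behead (x0 :: vs'))) = size (e0 :: es')
  by move: Hs => /= Hs; rewrite size_zip /=; lia.
apply/(all_nthP (e0, (x0, x0))) => k; rewrite size_zip Hz minnn => Hk.
rewrite nth_zip_cond size_zip Hz minnn Hk /= nth_zip_cond -/(behead (x0 :: vs')) Hz Hk /=.
have := Ha e0 x0 k Hk; rewrite /=.
by case: k Hk.
Qed.


Definition emin (G : graph) (pos : gV G -> nat) (e : gE G) :=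
  minn (pos (gends e).1) (pos (gends e).2).

Definition Inv (G : graph) : Prop := exists pos : gV G -> nat,
  [/\ injective pos,
      (forall e, pos (gends e).1 + 1 = pos (gends e).2 \/ pos (gends e).2 + 1 = pos (gends e).1)
    & injective (emin pos)].

Lemma Inv_sub (G H : graph) (f : gV G -> gV H) (g : gE G -> gE H) :
  injective f -> injective g ->
  (forall e, joins (g e) (f (gends e).1) (f (gends e).2)) -> Inv H -> Inv G.
Proof.
move=> fi gi Hj [pos [pi Pe Pm]]; exists (pos \o f); split.
- by move=> x y /pi /fi.
- move=> e /=; have := Pe (g e); case: (joinsP (Hj e)) => [[-> ->]|[-> ->]]; lia.
- have E : forall e, emin (pos \o f) e = emin pos (g e).
    move=> e; rewrite /emin /=; case: (joinsP (Hj e)) => [[-> ->]|[-> ->]] //; lia.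
  by move=> e1 e2; rewrite !E => /Pm /gi.
Qed.

Lemma Inv_contract (G H : graph) : contract_edge_step G H -> Inv H -> Inv G.
Proof.
case=> e0 [f [g /=]].
set u := (gends e0).1; set v := (gends e0).2.
case=> [[nopar fsurj] fid gi gim gj] [pos [pi Pe Pm]].
have [m mE] : exists m, m = minn (pos u) (pos v) by eexists.
have Huv : pos u + 1 = pos v \/ pos v + 1 = pos u by apply: Pe.
pose h p := if p <= m then p else p.-1.
have hP : forall p, (p <= m /\ h p = p) \/ (m < p /\ h p = p.-1).
  by move=> p; rewrite /h; case: leqP; [left|right].
have Hmm : forall x y, pos x = m -> pos y = m.+1 -> (x = u /\ y = v) \/ (x = v /\ y = u).
  move=> x y Hx Hy; case: Huv => Huv.
  - by left; split; apply: pi; lia.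
  - by right; split; apply: pi; lia.
have hE : forall x y, h (pos x) = h (pos y) <-> f x = f y.
  move=> x y; rewrite fid; split.
  - move=> Hh; case: (hP (pos x)) => [[H1 H2]|[H1 H2]]; case: (hP (pos y)) => [[H3 H4]|[H3 H4]].
    + by left; apply: pi; lia.
    + have [Hx Hy] : pos x = m /\ pos y = m.+1 by lia.
      by right; apply: Hmm.
    + have [Hx Hy] : pos y = m /\ pos x = m.+1 by lia.
      by right; case: (Hmm _ _ Hx Hy) => [[-> ->]|[-> ->]]; auto.
    + by left; apply: pi; lia.
  - case=> [->//|[[-> ->]|[-> ->]]];
      case: (hP (pos u)) => [[? ->]|[? ->]]; case: (hP (pos v)) => [[? ->]|[? ->]]; lia.
have fsurj' : forall y, exists x, f x == y by move=> y; case: (fsurj y) => x <-; exists x.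
pose pre y := xchoose (fsurj' y).
have preE : forall y, f (pre y) = y by move=> y; apply/eqP; exact: (xchooseP (fsurj' y)).
pose pos' y := h (pos (pre y)).
have posE : forall x, pos' (f x) = h (pos x) by move=> x; apply/hE; rewrite preE.
(* edges of G are not e0, and avoid the pair {m, m+1} *)
have notuv : forall e, ~ (minn (pos (gends (g e)).1) (pos (gends (g e)).2) = m).
  move=> e Hm.
  have Hne : g e != e0 by apply/gim; exists e.
  have : joins (g e) u v.
    have := Pe (g e); case=> He.
    - have [Hx Hy] : pos (gends (g e)).1 = m /\ pos (gends (g e)).2 = m.+1 by lia.
      case: (Hmm _ _ Hx Hy) => [[Ha Hb]|[Ha Hb]];
        by rewrite /joins -Ha -Hb -surjective_pairing eqxx ?orbT.
    - have [Hx Hy] : pos (gends (g e)).2 = m /\ pos (gends (g e)).1 = m.+1 by lia.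
      case: (Hmm _ _ Hx Hy) => [[Ha Hb]|[Ha Hb]];
        by rewrite /joins -Ha -Hb -surjective_pairing eqxx ?orbT.
  by move/nopar => Heq; move: Hne; rewrite Heq eqxx.
exists pos'; split.
- move=> y1 y2; rewrite -(preE y1) -(preE y2) !posE; exact: (proj1 (hE _ _)).
- move=> e; have := notuv e; have := Pe (g e).
  case: (joinsP (gj e)) => [[-> ->]|[-> ->]]; rewrite !posE;
  set a := pos _; set b := pos _ => Hab Hn;
  case: (hP a) => [[? ->]|[? ->]]; case: (hP b) => [[? ->]|[? ->]]; lia.
- have E : forall e, emin pos' e = h (emin pos (g e)).
    move=> e; have := notuv e; have := Pe (g e); rewrite /emin.
    case: (hP (minn (pos (gends (g e)).1) (pos (gends (g e)).2))) => [[? ->]|[? ->]];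
    case: (joinsP (gj e)) => [[-> ->]|[-> ->]]; rewrite !posE;
    set a := pos _; set b := pos _ => Hab Hn;
    case: (hP a) => [[? ->]|[? ->]]; case: (hP b) => [[? ->]|[? ->]]; lia.
  move=> e1 e2; rewrite !E => Hh; apply: gi; apply: Pm.
  have := notuv e1; have := notuv e2; rewrite /emin in Hh *.
  case: (hP (minn (pos (gends (g e1)).1) (pos (gends (g e1)).2))) Hh => [[? ->]|[? ->]];
  case: (hP (minn (pos (gends (g e2)).1) (pos (gends (g e2)).2))) => [[? ->]|[? ->]]; lia.
Qed.

Lemma Inv_minor (G H : graph) : minor G H -> Inv H -> Inv G.
Proof.
elim=> {G H} [G H|G|G H K _ IH1 _ IH2]; last 2 first.
- by [].
- by move=> /IH2 /IH1.
case=> [[f [g [fb gb Hj]]]|[v [f [g [_ fi _ gb Hj]]]]|[e0 [f [g [fb gi _ Hj]]]]|].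
- by apply: (Inv_sub (f:=f) (g:=g)) => //; apply: bij_inj.
- by apply: (Inv_sub (f:=f) (g:=g)) => //; apply: bij_inj.
- by apply: (Inv_sub (f:=f) (g:=g)) => //; apply: bij_inj.
- exact: Inv_contract.
Qed.

Lemma usp_full (H : graph) : sp H = 0 -> has_usp_of_size H #|gV H|.
Proof.
rewrite /sp => Hsp; have Hle : #|gV H| <= usp H by lia.
case: (boolP `[< has_usp_of_size H #|gV H| >]) => [/asboolP //|Hn].
have : usp H <= #|gV H|.-1.
  apply/bigmax_leqP => k Pk; have := ltn_ord k.
  case: (ltngtP k #|gV H|) => Hk; [lia|lia|].
  by move: Pk; rewrite Hk (negbTE Hn).
have := gnonempty H; lia.
Qed.

Lemma usp_shortcut {H : graph} {vs : seq (gV H)} {es : seq (gE H)} {u v : gV H}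
  (Huv : uv_path u v vs es)
  (Hmin : forall vs' es', uv_path u v vs' es' -> size vs <= size vs')
  (Huniq : forall vs' es', uv_path u v vs' es' -> size vs' = size vs ->
            vs' = vs /\ es' = es) (e : gE H) (i j : nat) (x0 : gV H) : i < j -> j < size vs ->
  joins e (nth x0 vs i) (nth x0 vs j) -> j = i.+1 /\ e = nth e es i.
Proof.
move=> Hij Hj Hjn.
case/and3P: Huv => Hp /eqP Hh /eqP Hl.
case: (is_path_elim Hp) => Hs Hu Hja.
have [Hji|Hji] : j = i.+1 \/ i.+1 < j by lia.
- split => //; subst j.
  pose es' := set_nth e es i e.
  have Hs' : size es' = size es by rewrite size_set_nth; lia.
  have Hp' : is_path vs es'.
    apply: is_path_intro; rewrite ?Hs' // => e0 y0 k Hk.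
    have Hk' : k < size es' by rewrite Hs'.
    rewrite (set_nth_default (s:=es') e e0 Hk') /es' nth_set_nth /=.
    case: eqP => [->|Hne].
    + by rewrite (set_nth_default x0 y0 (n:=i)) ?(set_nth_default x0 y0 (n:=i.+1)) //; lia.
    + by rewrite (set_nth_default (s:=es) e0 e) //; apply: Hja.
  have [_ <-] := Huniq vs es' (introT and3P (And3 Hp' (introT eqP Hh) (introT eqP Hl))) erefl.
  by rewrite nth_set_nth /= eqxx.
- exfalso.
  pose vs' := take i.+1 vs ++ drop j vs.
  pose es' := take i es ++ e :: drop j es.
  have Hsv : size vs' = i.+1 + (size vs - j) by rewrite size_cat size_take size_drop; case: ltnP; lia.
  have Hse : size es' = i + (size es - j).+1.
    by rewrite size_cat /= size_take size_drop; case: ltnP; lia.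
  have Hp' : is_path vs' es'.
    apply: is_path_intro; first by rewrite Hsv Hse; lia.
      rewrite /vs'; apply: (subseq_uniq _ Hu).
      rewrite -{3}(cat_take_drop i.+1 vs); apply: cat_subseq => //.
      have -> : j = (j - i.+1) + i.+1 by lia.
      by rewrite -drop_drop drop_subseq.
    move=> e0 y0 k Hk; rewrite /vs' /es' !nth_cat !size_take.
    have -> : (if i.+1 < size vs then i.+1 else size vs) = i.+1 by case: ltnP; lia.
    have -> : (if i < size es then i else size es) = i by case: ltnP; lia.
    have [Hki|[Hki|Hki]] : k < i \/ k = i \/ i < k by lia.
    + have -> : k < i by [].
      have -> : k < i.+1 by lia.
      have -> : k.+1 < i.+1 by lia.
      rewrite !nth_take //; try lia; apply: Hja; lia.
    + subst k; rewrite ltnn ltnSn ltnn !subnn nth_take //= nth_drop addn0.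
      by rewrite (set_nth_default x0) ?(set_nth_default x0 y0 (n:=j)) //; lia.
    + have -> : (k < i) = false by lia.
      have -> : (k < i.+1) = false by lia.
      have -> : (k.+1 < i.+1) = false by lia.
      have -> : k - i = (k - i.+1).+1 by lia.
      rewrite /= !nth_drop.
      have -> : j + (k.+1 - i.+1) = (j + (k - i.+1)).+1 by lia.
      apply: Hja; rewrite Hse in Hk; lia.
  have Hl' : last u vs' = v.
    rewrite -(nth_last u) Hsv nth_cat size_take.
    have -> : (if i.+1 < size vs then i.+1 else size vs) = i.+1 by case: ltnP; lia.
    have -> : ((i.+1 + (size vs - j)).-1 < i.+1) = false by lia.
    rewrite nth_drop -Hl -(nth_last u); congr nth; lia.
  have Hh' : ohead vs' = Some u.
    by move: Hh; rewrite /vs'; case: (vs) => [|y r].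
  have := Hmin vs' es'.
  rewrite /uv_path Hp' Hh' Hl' !eqxx Hsv => /(_ isT); lia.
Qed.


Lemma usp_Inv (H : graph) : has_usp_of_size H #|gV H| -> Inv H.
Proof.
case=> vs [es [[u [v [Huv Hmin Huniq]]] Hsz]].
case/and3P: (Huv) => Hp _ _.
case: (is_path_elim Hp) => Hs Hu Hja.
have Hin : forall x, x \in vs.
  move=> x; have Hsz' : size (enum (gV H)) <= size vs by rewrite -cardE Hsz.
  have [_ E] := uniq_min_size (s2 := enum (gV H)) Hu (fun y _ => mem_enum _ y) Hsz'.
  by rewrite E mem_enum.
pose pos x := index x vs.
have Hpos : forall x, pos x < size vs by move=> x; rewrite index_mem.
have Hnth : forall x x0, nth x0 vs (pos x) = x by move=> x x0; apply: nth_index.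
have Hedge : forall e, exists2 i, e = nth e es i &
    (pos (gends e).1 = i /\ pos (gends e).2 = i.+1) \/ (pos (gends e).1 = i.+1 /\ pos (gends e).2 = i).
  move=> e; set a := (gends e).1; set b := (gends e).2.
  have Hab : pos a != pos b.
    apply/eqP => /(congr1 (nth a vs)); rewrite !Hnth => Eab.
    by move: (gnoloop e); rewrite -/a -/b Eab eqxx.
  case: (ltngtP (pos a) (pos b)) Hab => // Hlt _.
  - have := usp_shortcut Huv Hmin Huniq (e := e) (x0 := a) Hlt (Hpos b).
    rewrite !Hnth joins_ends => /(_ isT) [E1 E2].
    by exists (pos a) => //; left.
  - have := usp_shortcut Huv Hmin Huniq (e := e) (x0 := a) Hlt (Hpos a).
    rewrite !Hnth joinsC joins_ends => /(_ isT) [E1 E2].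
    by exists (pos b) => //; right.
exists pos; split.
- by move=> x y E; rewrite -(Hnth x x) E Hnth.
- by move=> e; case: (Hedge e) => i _ [[-> ->]|[-> ->]]; lia.
- move=> e1 e2 Hm.
  case: (Hedge e1) => i1 E1 H1; case: (Hedge e2) => i2 E2 H2.
  have Hi : i2 = i1 by move: Hm; rewrite /emin; lia.
  have Hb : i1 < size es by have := Hpos (gends e1).1; have := Hpos (gends e1).2; lia.
  subst i2; rewrite E1 E2; exact: set_nth_default.
Qed.

Fixpoint blocks (T : Type) (adj : T -> T -> bool) (x : T) (r : seq T) : seq (seq T) :=
  match r with
  | [::] => [:: [:: x]]
  | y :: r' => let ss := blocks adj y r' in
      if adj x y then (x :: head [::] ss) :: behead ss else [:: x] :: ss
  end.


Lemma blocks_head {T : eqType} {adj : rel T} (x : T) (r : seq T) : exists t rest, blocks adj x r = (x :: t) :: rest.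
Proof.
elim: r x => [|y r IH] x /=; first by exists [::], [::].
case: (IH y) => t [rest ->] /=.
by case: (adj x y); [exists (y :: t), rest | exists [::], ((y :: t) :: rest)].
Qed.

Lemma blocks_flatten {T : eqType} {adj : rel T} (x : T) (r : seq T) : flatten (blocks adj x r) = x :: r.
Proof.
elim: r x => [|y r IH] x //=.
have := IH y; case: (blocks_head (adj:=adj) y r) => t [rest E]; rewrite E /= => IHe.
by case: (adj x y) => /=; [case: IHe => -> | rewrite IHe].
Qed.

Lemma blocks_nonempty {T : eqType} {adj : rel T} (x : T) (r : seq T) : all (fun s => s != [::]) (blocks adj x r).
Proof.
elim: r x => [|y r IH] x //=.
have := IH y; case: (blocks_head (adj:=adj) y r) => t [rest E]; rewrite E => Hr.
by case: (adj x y) => /=; move: Hr => /= ->.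
Qed.

Lemma blocks_sorted {T : eqType} {adj : rel T} (x : T) (r : seq T) s : s \in blocks adj x r -> sorted adj s.
Proof.
elim: r x s => [|y r IH] x s /=; first by rewrite inE => /eqP ->.
have := IH y; case: (blocks_head (adj:=adj) y r) => t [rest E]; rewrite E /= => IHs.
case Hxy: (adj x y); rewrite !inE.
- case/orP => [/eqP ->|Hs]; last by apply: IHs; rewrite inE Hs orbT.
  by rewrite /= Hxy /=; have := IHs (y :: t); rewrite inE eqxx /= => ->.
- case/orP => [/eqP -> //|]; exact: IHs.
Qed.

Lemma blocks_consec {T : eqType} {adj : rel T} (x : T) (r : seq T) l1 a b l2 : x :: r = l1 ++ a :: b :: l2 -> adj a b ->
  exists2 s, s \in blocks adj x r & exists s1 s2, s = s1 ++ a :: b :: s2.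
Proof.
elim: r x l1 => [|y r IH] x l1.
  by case: l1 => [|c [|d l1]].
case: l1 => [|c l1] /=.
- case=> -> -> _ Hab; rewrite Hab.
  case: (blocks_head (adj:=adj) b r) => t [rest ->] /=.
  by exists (a :: b :: t); [rewrite inE eqxx | exists [::], t].
- case=> -> E Hab; case: (IH y l1 E Hab) => s Hs Hs12.
  case: (blocks_head (adj:=adj) y r) Hs => t [rest Er]; rewrite Er /= => Hs.
  case: (adj c y).
  + move: Hs; rewrite inE => /orP [/eqP Es|Hs].
    * case: Hs12 => s1 [s2 E12]; exists (c :: s); first by rewrite inE Es eqxx.
      by exists (c :: s1), s2; rewrite E12.
    * by exists s => //; rewrite inE Hs orbT.
  + by exists s => //; rewrite inE Hs orbT.
Qed.


Lemma nth_mid (T : Type) (x0 : T) s1 a b s2 :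
  nth x0 (s1 ++ a :: b :: s2) (size s1) = a /\ nth x0 (s1 ++ a :: b :: s2) (size s1).+1 = b.
Proof. by elim: s1. Qed.

Lemma Inv_dup (G : graph) : Inv G -> disjoint_union_of_paths G.
Proof.
case=> pos [pi Pe Pm].
pose N := (\max_x pos x).+1.
pose pk p := [pick x | pos x == p].
have pkE : forall x, pk (pos x) = Some x.
  move=> x; rewrite /pk; case: pickP => [y /eqP /pi -> //|/(_ x)].
  by rewrite eqxx.
pose l := pmap pk (iota 0 N).
have lu : uniq l.
  apply: (pmap_uniq (g := pos)); last exact: iota_uniq.
  by move=> p; rewrite /pk; case: pickP => [y /eqP|].
have lm : forall x, x \in l.
  move=> x; rewrite mem_pmap -pkE; apply: map_f; rewrite mem_iota add0n /N ltnS.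
  exact: leq_bigmax.
have lc : forall a b, pos b = (pos a).+1 -> exists l1 l2, l = l1 ++ a :: b :: l2.
  move=> a b Hb.
  have Hbn : pos b < N by rewrite /N ltnS; exact: leq_bigmax.
  rewrite /l; have -> : N = pos a + (N - pos a).-2.+2 by lia.
  rewrite iotaD pmap_cat add0n /= pkE -Hb pkE; by exists (pmap pk (iota 0 (pos a))), (pmap pk (iota (pos b).+1 (N - pos a).-2)).
pose adj (x y : gV G) := [exists e : gE G, joins e x y].
have [x0 _] : exists x : gV G, true.
  by case/card_gt0P: (gnonempty G) => x _; exists x.
have [x [r Er]] : exists x r, l = x :: r.
  by case El : l => [|x r]; [move: (lm x0); rewrite El | exists x, r].
have uniqE : forall (e1 e2 : gE G) a b, joins e1 a b -> joins e2 a b -> e1 = e2.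
  move=> e1 e2 a b H1 H2; apply: Pm; rewrite /emin.
  by case: (joinsP H1) => [[-> ->]|[-> ->]]; case: (joinsP H2) => [[-> ->]|[-> ->]]; lia.
have conE : forall (e : gE G) a b, pos b = (pos a).+1 -> joins e a b ->
    exists2 s, s \in blocks adj x r & exists2 i, i.+1 < size s &
      exists x0, joins e (nth x0 s i) (nth x0 s i.+1).
  move=> e a b Hb Hj; case: (lc a b Hb) => l1 [l2 El].
  have Hab : adj a b by apply/existsP; exists e.
  have := blocks_consec (Logic.eq_trans (esym Er) El) Hab.
  case=> s Hs [s1 [s2 Es]]; exists s => //; exists (size s1).
    by rewrite Es size_cat /=; lia.
  by exists a; rewrite Es; have [-> ->] := nth_mid a s1 a b s2.
exists (blocks adj x r); split.
- exact: blocks_nonempty.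
- by rewrite blocks_flatten -Er.
- by move=> y; rewrite blocks_flatten -Er.
- move=> e; case: (Pe e) => He.
  + by apply: (conE e (gends e).1 (gends e).2) => //; [lia | exact: joins_ends].
  + by apply: (conE e (gends e).2 (gends e).1) => //; [lia | rewrite joinsC; exact: joins_ends].
- move=> s Hs i Hi y0.
  have /(sortedP y0) /(_ i Hi) /existsP [e He] := blocks_sorted Hs.
  apply/eqP/cards1P; exists e; apply/setP => e'; rewrite !inE.
  apply/idP/eqP => [He'|->//]; exact: uniqE He' He.
Qed.

Definition Inv2 (G : graph) : Prop := exists pos : gV G -> nat,
  [/\ injective pos, (forall x, pos x < #|gV G|),
      (forall e, pos (gends e).1 + 1 = pos (gends e).2 \/ pos (gends e).2 + 1 = pos (gends e).1)
    & injective (emin pos)].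

Lemma nth_catr' (T : Type) (x0 : T) A B k : nth x0 (A ++ B) (size A + k) = nth x0 B k.
Proof. by elim: A. Qed.

Lemma nth_flatten (T : eqType) (y : T) (ss : seq (seq T)) s i :
  s \in ss -> i.+1 < size s -> exists2 j, j.+1 < size (flatten ss) &
    nth y (flatten ss) j = nth y s i /\ nth y (flatten ss) j.+1 = nth y s i.+1.
Proof.
case/splitPr => ss1 ss2 Hi; exists (size (flatten ss1) + i).
  by rewrite flatten_cat /= !size_cat; lia.
rewrite flatten_cat /= -addnS !nth_catr' !nth_cat Hi.
by have -> : i < size s by lia.
Qed.

Lemma dup_Inv2 (G : graph) : disjoint_union_of_paths G -> Inv2 G.
Proof.
case=> ss [Hne Hu Hcov Hedge Hcard].
set l := flatten ss.
have Hsz : #|gV G| = size l.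
  rewrite -(card_uniqP Hu); apply: eq_card => y; by rewrite Hcov.
have [y _] : exists x : gV G, true.
  by case/card_gt0P: (gnonempty G) => x _; exists x.
have Hel : forall e, exists2 j, j.+1 < size l &
    joins e (nth y l j) (nth y l j.+1) /\ #|[set e | joins e (nth y l j) (nth y l j.+1)]| = 1.
  move=> e; case: (Hedge e) => s Hs [i Hi [x0 Hj]].
  case: (nth_flatten y Hs Hi) => j Hj1 [E1 E2]; exists j => //.
  rewrite E1 E2; split; last by apply: Hcard.
  by rewrite (set_nth_default x0 y (n:=i)) ?(set_nth_default x0 y (n:=i.+1)) //; lia.
pose pos x := index x l.
have Hpos : forall j, j < size l -> pos (nth y l j) = j by move=> j Hj; apply: index_uniq.
have Hep : forall e, exists2 j, j.+1 < size l &
   (pos (gends e).1 = j /\ pos (gends e).2 = j.+1) \/ (pos (gends e).1 = j.+1 /\ pos (gends e).2 = j).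
  move=> e; case: (Hel e) => j Hj [He _]; exists j => //.
  by case: (joinsP He) => [[-> ->]|[-> ->]]; rewrite !Hpos //; lia.
exists pos; split.
- move=> a b E; rewrite -(nth_index y (Hcov a)) -(nth_index y (Hcov b)); by rewrite -/l -/(pos a) E.
- by move=> x; rewrite Hsz index_mem.
- by move=> e; case: (Hep e) => j _ [[-> ->]|[-> ->]]; lia.
- move=> e1 e2 Hm.
  case: (Hel e1) => j1 Hj1 [He1 Hc]; case: (Hel e2) => j2 Hj2 [He2 _].
  have Ej : j2 = j1.
    move: Hm; rewrite /emin.
    case: (joinsP He1) => [[-> ->]|[-> ->]]; case: (joinsP He2) => [[-> ->]|[-> ->]];
    rewrite !Hpos //; lia.
  subst j2; move/eqP/cards1P: Hc => [z Ez].
  have : e1 \in [set e | joins e (nth y l j1) (nth y l j1.+1)] by rewrite inE.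
  have : e2 \in [set e | joins e (nth y l j1) (nth y l j1.+1)] by rewrite inE.
  by rewrite Ez !inE => /eqP -> /eqP ->.
Qed.

Definition del_graph (H : graph) (e0 : gE H) : graph :=
  @Graph (gV H) {e : gE H | e != e0} (fun e => gends (sval e))
    (fun e => gnoloop (sval e)) (gnonempty H).

Lemma del_step (H : graph) (e0 : gE H) : minor_step (del_graph e0) H.
Proof.
apply: Or43; exists e0, id, (fun e => sval e); split => //.
- by exists id.
- exact: val_inj.
- move=> e; split => [He|[e' <-]]; last exact: (svalP e').
  by exists (exist _ e He).
- by move=> e; exact: joins_ends.
Qed.

Lemma del_minor n : forall (G H : graph), #|gE H| - #|gE G| = n ->
  forall (f : gV G -> gV H) (g : gE G -> gE H), bijective f -> injective g ->
  (forall e, joins (g e) (f (gends e).1) (f (gends e).2)) -> minor G H.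
Proof.
elim: n => [|n IH] G H Hn f g fb gi Hj.
  apply: rt_step; apply: Or41; exists f, g; split => //.
  apply: inj_card_bij => //; lia.
case: (pickP (fun e0 => e0 \notin codom g)) => [e0 He0|Hall]; last first.
  have : #|gE H| <= #|gE G|.
    rewrite -(card_codom gi); apply: subset_leq_card; apply/subsetP => e _.
    by move: (Hall e) => /= /negbFE.
  lia.
have gne : forall e, g e != e0.
  by move=> e; apply/eqP => E; move: He0; rewrite -E codom_f.
pose g' e : gE (del_graph e0) := exist _ (g e) (gne e).
apply: (@rt_trans _ _ _ (del_graph e0)); last by apply: rt_step; exact: del_step.
apply: (IH G (del_graph e0) _ (f : gV G -> gV (del_graph e0)) g') => //.
- by rewrite /= card_sig cardC1 -predn_sub Hn.
- by move=> e1 e2 [] /gi.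
Qed.

Definition pends m (k : 'I_m) : 'I_m.+1 * 'I_m.+1 := (inord k, inord k.+1).

Lemma pathG_noloop m (k : 'I_m) : (pends k).1 != (pends k).2.
Proof.
have := ltn_ord k => Hk.
by apply/eqP => /(congr1 val) /=; rewrite !inordK //; lia.
Qed.

Lemma pathG_nonempty m : 0 < #|'I_m.+1|.
Proof. by rewrite card_ord. Qed.

Definition pathG (m : nat) : graph :=
  @Graph 'I_m.+1 'I_m (@pends m) (@pathG_noloop m) (pathG_nonempty m).

Lemma pathG_joins m (e : gE (pathG m)) x y : joins e x y ->
  (nat_of_ord x = e /\ nat_of_ord y = e.+1) \/ (nat_of_ord x = e.+1 /\ nat_of_ord y = e).
Proof.
have := ltn_ord e => He.
case/joinsP => [[<- <-]|[<- <-]] /=; rewrite !inordK //; lia.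
Qed.

Lemma pathG_usp m : has_usp_of_size (pathG m) #|gV (pathG m)|.
Proof.
pose vs : seq (gV (pathG m)) := enum 'I_m.+1.
pose es : seq (gE (pathG m)) := enum 'I_m.
have Hval : forall k x0, k < m.+1 -> nat_of_ord (nth x0 vs k) = k by move=> k x0 Hk; exact: nth_enum_ord.
have Hvs : size vs = m.+1 by rewrite size_enum_ord.
have Hes : size es = m by rewrite size_enum_ord.
pose u : gV (pathG m) := nth ord0 vs 0; pose v : gV (pathG m) := nth ord0 vs m.
have Hu : nat_of_ord u = 0 by rewrite Hval.
have Hv : nat_of_ord v = m by rewrite Hval.
have Hp : is_path vs es.
  apply: is_path_intro; rewrite ?Hvs ?Hes //; first exact: enum_uniq.
  move=> e0 x0 k Hk; rewrite /joins; apply/orP; left; apply/eqP.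
  congr pair; apply: ord_inj; rewrite /= inordK ?nth_enum_ord ?Hval //; lia.
have Hpath : uv_path u v vs es.
  apply/and3P; split => //.
    by rewrite /u; case: (vs) Hvs.
  apply/eqP; apply: ord_inj; rewrite -nth_last Hvs /= (set_nth_default ord0) ?Hvs // Hval //.
have Hall : forall vs' es', uv_path u v vs' es' ->
    size vs' = m.+1 /\ (forall k, k < size vs' -> nat_of_ord (nth (ord0 : gV (pathG m)) vs' k) = k) /\
    (forall e0 k, k < size es' -> nat_of_ord (nth e0 es' k) = k).
  move=> vs' es' /and3P [Hp' /eqP Hh /eqP Hl].
  case: (is_path_elim Hp') => Hs' Hu' Hja.
  have Hstep : forall k, k.+1 < size vs' -> nat_of_ord (nth (ord0 : gV (pathG m)) vs' k) = k ->
      (k > 0 -> nat_of_ord (nth (ord0 : gV (pathG m)) vs' k.-1) = k.-1) ->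
      forall e0, nat_of_ord (nth (ord0 : gV (pathG m)) vs' k.+1) = k.+1 /\ nat_of_ord (nth e0 es' k) = k.
    move=> k Hk Hvk Hvk1 e0.
    have := pathG_joins (Hja e0 ord0 k (ltac:(lia))).
    rewrite Hvk => -[[He Hn]|[He Hn]]; first by split; lia.
    exfalso; have Hk0 : k > 0 by lia.
    have E : nat_of_ord (nth (ord0 : gV (pathG m)) vs' k.+1) = nat_of_ord (nth (ord0 : gV (pathG m)) vs' k.-1).
      by rewrite (Hvk1 Hk0); lia.
    move/ord_inj/eqP: E; rewrite nth_uniq //; try lia.
    exact: leq_ltn_trans (leq_pred k) (ltnW Hk).
  have Hvk : forall k, k < size vs' -> forall j, j <= k -> nat_of_ord (nth (ord0 : gV (pathG m)) vs' j) = j.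
    elim=> [|k IHk] Hk j Hj.
      have -> : j = 0 by lia.
      by move: Hh Hu; case: (vs') => [|a r] //= [->].
    have [->|Hjk] : j = k.+1 \/ j <= k by lia.
      2: by apply: IHk => //; lia.
    have Hk1 : 0 < k -> nat_of_ord (nth (ord0 : gV (pathG m)) vs' k.-1) = k.-1.
      by move=> Hk0; apply: IHk; lia.
    have He0 : 0 < size es' by lia.
    have [e0 _] : exists e0 : gE (pathG m), true.
      by move: He0; case: (es') => [|e0 r] //; exists e0.
    by case: (Hstep k (ltac:(lia)) (IHk (ltac:(lia)) k (leqnn k)) Hk1 e0).
  have Hsz : size vs' = m.+1.
    have : nat_of_ord (last u vs') = m by rewrite Hl.
    rewrite -nth_last (set_nth_default (ord0 : gV (pathG m))); last by lia.
    move=> H1.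
    have H2 : nat_of_ord (nth (ord0 : gV (pathG m)) vs' (size vs').-1) = (size vs').-1.
      by apply: (Hvk (size vs').-1) => //; lia.
    lia.
  split => //; split; first by move=> k Hk; apply: (Hvk k).
  move=> e0 k Hk.
  have Hk' : k.+1 < size vs' by lia.
  case: (Hstep k Hk' (Hvk k (ltac:(lia)) k (leqnn k)) _ e0) => //.
  by move=> Hk0; apply: (Hvk k); lia.
exists vs, es; split; last by rewrite Hvs card_ord.
exists u, v; split => //.
- by move=> vs' es' /Hall [-> _]; rewrite Hvs.
- move=> vs' es' Hvp _; have [Hsz [Hv' He']] := Hall _ _ Hvp.
  case/and3P: Hvp => Hp' _ _; case: (is_path_elim Hp') => Hs' _ _.
  have Hsz' : size es' = m by lia.
  clear Hs' Hp'.
  split.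
  + apply: (@eq_from_nth _ ord0); rewrite ?Hsz ?Hvs // => k Hk.
    by apply: ord_inj; rewrite Hv' ?Hsz // Hval.
  + case: es' He' Hsz' => [|e0 r] He' Hsz'.
      by apply: esym; apply: size0nil; rewrite Hes.
    apply: (@eq_from_nth _ e0); rewrite ?Hsz' ?Hes // => k Hk.
    apply: ord_inj; rewrite He' ?Hsz' // nth_enum_ord //.
Qed.

Lemma Inv2_H (G : graph) : Inv2 G -> exists H, minor G H /\ sp H = 0.
Proof.
case=> pos [pi Hlt Pe Pm].
have [m Hm] : exists m, #|gV G| = m.+1.
  by exists #|gV G|.-1; have := gnonempty G; lia.
have Hpos : forall x, pos x <= m by move=> x; have := Hlt x; lia.
have Hemin : forall e, emin pos e < m.
  by move=> e; rewrite /emin; have := Pe e; have := Hpos (gends e).1; have := Hpos (gends e).2; lia.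
exists (pathG m); split; last first.
  rewrite /sp; apply/eqP; rewrite subn_eq0 /usp.
  apply: (@leq_bigmax_cond _ _ (fun k => nat_of_ord k) ord_max).
  by apply/asboolP; exact: pathG_usp.
pose f (x : gV G) : gV (pathG m) := inord (pos x).
pose g (e : gE G) : gE (pathG m) := Ordinal (Hemin e).
apply: (@del_minor _ G (pathG m) erefl f g).
- apply: inj_card_bij; last by rewrite /= card_ord Hm.
  by move=> x y /(congr1 (@nat_of_ord _)); rewrite /f !inordK ?ltnS ?Hpos // => /pi.
- by move=> e1 e2 /(congr1 (@nat_of_ord _)) /= /Pm.
- move=> e; rewrite /joins; apply/orP.
  have E : forall a b : nat, a <= m -> b <= m -> a = b -> (inord a : 'I_m.+1) = inord b by move=> a b _ _ ->.
  case: (Pe e) => He; [left|right]; apply/eqP; rewrite /= /pends /f /emin /=; congr pair; apply: E;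
    rewrite ?Hpos //; try lia; have := Hemin e; rewrite /emin; lia.
Qed.

Theorem proposition6p1 (G : graph) :
  spfloor G = 0 <-> disjoint_union_of_paths G.
Proof.
split.
- rewrite /spfloor; case: ex_minnP => n /asboolP [H [Hm Hs]] _ Hn0; subst n.
  apply: Inv_dup; apply: (Inv_minor Hm); apply: usp_Inv; exact: usp_full.
- move/dup_Inv2/Inv2_H => [H [Hm Hs]].
  rewrite /spfloor; case: ex_minnP => n _ Hmin; apply/eqP; rewrite -leqn0.
  by apply: Hmin; apply/asboolP; exists H.
Qed.
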